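(* Let $F$ be a field of characteristic zero. Every derivation of the Lie algebra $W^*(1,0)$ can be written as a sum of an inner derivation and a scalar derivation.
   Context: $W^*(1,0)$ is the Lie algebra over $F$ with basis $\{e^{ax}x^i\partial: a\in\mathbb Z, i\in\mathbb N\}$ ($\mathbb N$ the nonnegative integers), viewed as vector fields $f\partial$ with $f$ in the $F$-algebra $F[e^{\pm x},x]$ (basis $e^{ax}x^i$, multiplication adding exponents, $\partial(e^{ax}x^i)=ae^{ax}x^i+ie^{ax}x^{i-1}$), with bracket $[f\partial,g\partial]=(f\partial(g)-g\partial(f))\partial$. A derivation of a Lie algebra $L$ is a linear map $D:L\to L$ with $D([l_1,l_2])=[D(l_1),l_2]+[l_1,D(l_2)]$. A derivation $D$ is a scalar derivation if for every basis element $l$ (here $l=e^{ax}x^i\partial$) one has $D(l)=f_l\,l$ for some scalar $f_l\in F$ depending on $l$. *)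

(* Defs.v *)
(* with multinomials' monoid algebra {malg F[K]} used as the
   space of finitely supported F-valued functions on K = Z x N. *)
From HB Require Import structures.
From mathcomp Require Import all_boot all_order all_algebra.
From mathcomp Require Import finmap monalg.
Set Implicit Arguments. Unset Strict Implicit. Unset Printing Implicit Defensive.
Import Order.TTheory GRing.Theory Num.Theory.
Local Open Scope ring_scope.

(* Index set of the basis: e^{ax} x^i  <->  (a, i), a : int, i : nat. *)
Definition W_index := (int * nat)%type.

(* F[e^{+-x}, x] as an F-vector space with basis e^{ax}x^i; the Lie algebra
   W^*(1,0) = { f d : f in F[e^{+-x},x] } is identified with it via f d <-> f. *)
Definition Wstar (F : fieldType) := {malg F[W_index]}.

Definition ebasis (F : fieldType) (a : int) (i : nat) : Wstar F := << (a, i) >>.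

(* Multiplication of F[e^{+-x},x]: e^{ax}x^i * e^{bx}x^j = e^{(a+b)x}x^{i+j},
   extended bilinearly. *)
Definition Wmul (F : fieldType) (f g : Wstar F) : Wstar F :=
  \sum_(k <- msupp f) \sum_(l <- msupp g)
     (f@_k * g@_l) *: (<< (k.1 + l.1, (k.2 + l.2)%N) >> : Wstar F).

(* d(e^{ax}x^i) = a e^{ax}x^i + i e^{ax}x^{i-1}, extended linearly
   (for i = 0 the second term has coefficient 0). *)
Definition Wder (F : fieldType) (f : Wstar F) : Wstar F :=
  \sum_(k <- msupp f)
     f@_k *: ((k.1)%:~R *: (<< k >> : Wstar F)
              + (k.2)%:R *: (<< (k.1, (k.2).-1) >> : Wstar F)).

(* Lie bracket [f d, g d] = (f d(g) - g d(f)) d. *)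
Definition Wbracket (F : fieldType) (f g : Wstar F) : Wstar F :=
  Wmul f (Wder g) - Wmul g (Wder f).

Definition is_linear_map (F : fieldType) (D : Wstar F -> Wstar F) : Prop :=
  forall (c : F) (x y : Wstar F), D (c *: x + y) = c *: D x + D y.

Definition is_derivation (F : fieldType) (D : Wstar F -> Wstar F) : Prop :=
  is_linear_map D /\
  forall x y : Wstar F, D (Wbracket x y) = Wbracket (D x) y + Wbracket x (D y).

Definition ad (F : fieldType) (u : Wstar F) : Wstar F -> Wstar F :=
  fun x => Wbracket u x.

Definition is_scalar_derivation (F : fieldType) (D : Wstar F -> Wstar F) : Prop :=
  is_derivation D /\
  forall (a : int) (i : nat), exists c : F, D (ebasis F a i) = c *: ebasis F a i.

(* Main.v *)
Require Import Defs.
From HB Require Import structures.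
From mathcomp Require Import all_boot all_order all_algebra.
From mathcomp Require Import finmap monalg.
From mathcomp Require Import ring zify.
Import GRing.Theory.
Local Open Scope ring_scope.
Set Implicit Arguments. Unset Strict Implicit.

Section S.
Variable F : fieldType.
Local Notation W := (Wstar F).
Local Notation K := W_index.

Definition lin (V : lmodType F) (phi : K -> V) (f : W) : V :=
  \sum_(k <- msupp f) f@_k *: phi k.

Lemma linw (V : lmodType F) (phi : K -> V) (f : W) (d : {fset K}) :
  (msupp f `<=` d)%fset -> lin phi f = \sum_(k <- d) f@_k *: phi k.
Proof.
move=> le; rewrite /lin (big_fset_incl _ le) //.
by move=> k _ /mcoeff_outdom ->; rewrite scale0r.
Qed.

Lemma lin_lin (V : lmodType F) (phi : K -> V) c (x y : W) :
  lin phi (c *: x + y) = c *: lin phi x + lin phi y.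
Proof.
set d := (msupp x `|` msupp y `|` msupp (c *: x + y))%fset.
have h1 : (msupp x `<=` d)%fset by rewrite /d -fsetUA fsubsetUl.
have h2 : (msupp y `<=` d)%fset by rewrite /d; apply: fsubset_trans (fsubsetUl _ _); exact: fsubsetUr.
have h3 : (msupp (c *: x + y) `<=` d)%fset by rewrite /d fsubsetUr.
rewrite (linw _ h1) (linw _ h2) (linw _ h3) scaler_sumr -big_split /=.
by apply: eq_bigr => k _; rewrite mcoeffD mcoeffZ scalerDl scalerA.
Qed.

Lemma lin0 (V : lmodType F) (phi : K -> V) : lin phi 0 = 0.
Proof. by rewrite /lin msupp0 big_seq_fset0. Qed.

Lemma linU (V : lmodType F) (phi : K -> V) k : lin phi << k >> = phi k.
Proof.
rewrite (linw _ msuppU_le) big_seq_fset1 mcoeffUU scale1r //.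
Qed.

Lemma UZ c k : << c *g k >> = c *: (<< k >> : W).
Proof. by apply/malgP => l; rewrite mcoeffZ !mcoeffU mulr_natr. Qed.

Definition islin (V : lmodType F) (phi : W -> V) :=
  forall c x y, phi (c *: x + y) = c *: phi x + phi y.

Lemma islin0 (V : lmodType F) (phi : W -> V) : islin phi -> phi 0 = 0.
Proof.
move=> h; have e := h 1 0 0; rewrite !scale1r addr0 in e.
by apply: (addrI (phi 0)); rewrite addr0 -e.
Qed.

Lemma lin_ext (V : lmodType F) (phi psi : W -> V) :
  islin phi -> islin psi -> (forall k, phi << k >> = psi << k >>) ->
  forall z, phi z = psi z.
Proof.
move=> hp hq hk z; rewrite (monalgE z).
elim: (msupp z : seq K) => [|k s IH]; first by rewrite big_nil !islin0.
by rewrite big_cons UZ hp hq IH hk.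
Qed.

Lemma islin_lin (V : lmodType F) (phi : K -> V) : islin (lin phi).
Proof. exact: lin_lin. Qed.

Definition kk (k l : K) : K := (k.1 + l.1, (k.2 + l.2)%N).

Lemma lin_phi (V : lmodType F) (A B : K -> V) c f :
  lin (fun k => c *: A k + B k) f = c *: lin A f + lin B f.
Proof.
rewrite /lin scaler_sumr -big_split /=; apply: eq_bigr => k _.
by rewrite scalerDr !scalerA mulrC.
Qed.

Lemma lin_ext_fun (V : lmodType F) (A B : K -> V) f :
  (forall k, A k = B k) -> lin A f = lin B f.
Proof. by move=> e; apply: eq_bigr => k _; rewrite e. Qed.

Lemma WmulE (f g : W) :
  Wmul f g = lin (fun k => lin (fun l => (<< kk k l >> : W)) g) f.
Proof.
rewrite /Wmul /lin; apply: eq_bigr => k _; rewrite scaler_sumr.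
by apply: eq_bigr => l _; rewrite scalerA.
Qed.

Lemma Wmul_linl g : islin (fun f => Wmul f g).
Proof. by move=> c x y /=; rewrite !WmulE lin_lin. Qed.

Lemma Wmul_linr f : islin (fun g => Wmul f g).
Proof.
move=> c x y /=; rewrite !WmulE -lin_phi; apply: lin_ext_fun => k.
by rewrite lin_lin.
Qed.

Lemma WmulUU k l : Wmul (<< k >> : W) << l >> = << kk k l >>.
Proof. by rewrite WmulE !linU. Qed.

Lemma WmulC (f g : W) : Wmul f g = Wmul g f.
Proof.
move: f; apply: lin_ext; [exact: Wmul_linl | exact: Wmul_linr | move=> k].
move: g; apply: lin_ext; [exact: Wmul_linr | exact: Wmul_linl | move=> l].
by rewrite !WmulUU /kk addrC addnC.
Qed.

Lemma WmulA (f g h : W) : Wmul f (Wmul g h) = Wmul (Wmul f g) h.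
Proof.
move: f; apply: lin_ext.
- exact: Wmul_linl.
- by move=> c x y /=; rewrite !Wmul_linl.
move=> k; move: g; apply: lin_ext.
- by move=> c x y /=; rewrite Wmul_linl Wmul_linr.
- by move=> c x y /=; rewrite Wmul_linr Wmul_linl.
move=> l; move: h; apply: lin_ext.
- by move=> c x y /=; rewrite !Wmul_linr.
- by move=> c x y /=; rewrite !Wmul_linr.
by move=> m; rewrite !WmulUU /kk /= addrA addnA.
Qed.

Lemma Wmul1 (f : W) : Wmul << (0%R, 0%N) >> f = f.
Proof.
move: f; apply: lin_ext; [exact: Wmul_linr | by move=> c x y | move=> [a i]].
by rewrite WmulUU /kk /= add0r add0n.
Qed.

Lemma WmulDl (f g h : W) : Wmul (f + g) h = Wmul f h + Wmul g h.
Proof. by have := Wmul_linl h 1 f g; rewrite !scale1r. Qed.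

Lemma Wone_neq0 : (<< (0%R, 0%N) >> : W) != 0.
Proof. by rewrite monalgU_eq0 oner_eq0. Qed.

End S.

Definition WR (F : fieldType) : Type := Wstar F.
HB.instance Definition _ (F : fieldType) := GRing.Lmodule.on (WR F).
HB.instance Definition _ (F : fieldType) :=
  GRing.Zmodule_isComNzRing.Build (WR F) (@WmulA F) (@WmulC F) (@Wmul1 F)
    (@WmulDl F) (@Wone_neq0 F).

Lemma jacobi_gen (R : comRingType) (d : R -> R)
  (dB : forall x y, d (x - y) = d x - d y)
  (dM : forall x y, d (x * y) = d x * y + x * d y) (f g h : R) :
  let br x y := x * d y - y * d x in
  br f (br g h) = br (br f g) h + br g (br f h).
Proof.
move=> br; rewrite /br !dB !dM; ring.
Qed.

Section T.
Variable F : fieldType.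
Local Notation W := (Wstar F).
Local Notation R := (WR F).
Local Notation K := W_index.

Lemma Wmul_def (f g : R) : f * g = Wmul f g.
Proof. by []. Qed.

Lemma Wone : (1 : R) = << (0%R, 0%N) >>.
Proof. by []. Qed.

Lemma WderE (f : W) : Wder f =
  lin (fun k => (k.1)%:~R *: (<< k >> : W) + (k.2)%:R *: << (k.1, (k.2).-1) >>) f.
Proof. by []. Qed.

Lemma Wder_lin : islin (@Wder F).
Proof. by move=> c x y; rewrite !WderE lin_lin. Qed.

Lemma WderU k : Wder (<< k >> : W) =
  (k.1)%:~R *: (<< k >> : W) + (k.2)%:R *: << (k.1, (k.2).-1) >>.
Proof. by rewrite WderE linU. Qed.

Lemma WmulZl (c : F) (x g : W) : Wmul (c *: x) g = c *: Wmul x g.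
Proof. by rewrite !WmulE -[c *: x]addr0 lin_lin lin0 addr0. Qed.
Lemma WmulZr (c : F) (x g : W) : Wmul g (c *: x) = c *: Wmul g x.
Proof. by rewrite !(WmulC g) WmulZl. Qed.
Lemma WmulDl' (x y g : W) : Wmul (x + y) g = Wmul x g + Wmul y g.
Proof. by have := Wmul_linl g 1 x y; rewrite !scale1r. Qed.
Lemma WmulDr' (x y g : W) : Wmul g (x + y) = Wmul g x + Wmul g y.
Proof. by have := Wmul_linr g 1 x y; rewrite !scale1r. Qed.

Lemma leib_aux (Uk Uk' Ul Ul' : W) a b c d :
  Wmul (a *: Uk + b *: Uk') Ul + Wmul Uk (c *: Ul + d *: Ul') =
  a *: Wmul Uk Ul + b *: Wmul Uk' Ul + (c *: Wmul Uk Ul + d *: Wmul Uk Ul').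
Proof. by rewrite WmulDl' WmulDr' !WmulZl !WmulZr. Qed.

Lemma hP (V : lmodType F) (P Q : V) (x y u v : F) :
  (x + y) *: P + (u + v) *: Q = x *: P + u *: Q + (y *: P + v *: Q).
Proof.
rewrite !scalerDl -!addrA; congr (_ + _); rewrite addrCA; congr (_ + _); exact: addrC.
Qed.

Lemma hG (V : lmodType F) (P Q Q2 Q3 : V) (x y c u v : F) :
  c *: Q = u *: Q2 + v *: Q3 ->
  (x + y) *: P + c *: Q = x *: P + u *: Q2 + (y *: P + v *: Q3).
Proof.
move=> ->; rewrite !scalerDl -!addrA; congr (_ + _); rewrite addrCA; congr (_ + _).
Qed.

Lemma Wder_leib (f g : W) : Wder (Wmul f g) = Wmul (Wder f) g + Wmul f (Wder g).
Proof.
move: f; apply: lin_ext.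
- by move=> c x y /=; rewrite Wmul_linl Wder_lin.
- move=> c x y /=; rewrite Wder_lin Wmul_linl Wmul_linl scalerDr !addrA; congr (_ + _).
  by rewrite -!addrA; congr (_ + _); exact: addrC.
move=> k; move: g; apply: lin_ext.
- by move=> c x y /=; rewrite Wmul_linr Wder_lin.
- move=> c x y /=; rewrite Wder_lin Wmul_linr Wmul_linr scalerDr !addrA; congr (_ + _).
  by rewrite -!addrA; congr (_ + _); exact: addrC.
move=> l; rewrite WmulUU (WderU (kk k l)) (WderU k) (WderU l) leib_aux.
case: k l => [a i] [b j] /=.
rewrite !WmulUU /kk /=.
rewrite intrD natrD.
case: i => [|i]; case: j => [|j] /=.
all: apply: hG.
- by rewrite add0r !scale0r addr0.
- by rewrite add0r add0n scale0r add0r.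
- by rewrite addr0 addn0 scale0r addr0.
- by rewrite scalerDl addSnnS.
Qed.
End T.

Lemma WscalerAl (F : fieldType) (a : F) (u v : WR F) : a *: (u * v) = (a *: u) * v.
Proof. by rewrite !Wmul_def WmulZl. Qed.

HB.instance Definition _ (F : fieldType) :=
  GRing.Lmodule_isLalgebra.Build F (WR F) (@WscalerAl F).
HB.instance Definition _ (F : fieldType) :=
  GRing.Lalgebra_isComAlgebra.Build F (WR F).

Section Gen.
Variable F : fieldType.
Variable A : comAlgType F.
Variable d : A -> A.
Hypothesis dL : forall c x y, d (c *: x + y) = c *: d x + d y.
Hypothesis dM : forall x y, d (x * y) = d x * y + x * d y.

Definition br (x y : A) := x * d y - y * d x.

Lemma dD x y : d (x + y) = d x + d y.
Proof. by have := dL 1 x y; rewrite !scale1r. Qed.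
Lemma d0 : d 0 = 0.
Proof. by have := dD 0 0; rewrite addr0 => e; apply: (addrI (d 0)); rewrite addr0 -e. Qed.
Lemma dZ c x : d (c *: x) = c *: d x.
Proof. by have := dL c x 0; rewrite !addr0 d0 addr0. Qed.
Lemma dN x : d (- x) = - d x.
Proof. by rewrite -scaleN1r dZ scaleN1r. Qed.
Lemma dB x y : d (x - y) = d x - d y.
Proof. by rewrite dD dN. Qed.

Lemma br_linr u c x y : br u (c *: x + y) = c *: br u x + br u y.
Proof. rewrite /br dL mulrDr mulrDl -scalerAr -scalerAl scalerBr; ring. Qed.
Lemma br_linl v c x y : br (c *: x + y) v = c *: br x v + br y v.
Proof. rewrite /br dL mulrDr mulrDl -scalerAr -scalerAl scalerBr; ring. Qed.
Lemma br_jacobi f g h : br f (br g h) = br (br f g) h + br g (br f h).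
Proof. by rewrite /br !dB !dM; ring. Qed.
Lemma brBl x y v : br (x - y) v = br x v - br y v.
Proof. by rewrite /br dB; ring. Qed.
Lemma brBr x y v : br v (x - y) = br v x - br v y.
Proof. by rewrite /br dB; ring. Qed.
Lemma br0l v : br 0 v = 0.
Proof. by rewrite /br d0; ring. Qed.
Lemma br0r v : br v 0 = 0.
Proof. by rewrite /br d0; ring. Qed.
Lemma brZr u c x : br u (c *: x) = c *: br u x.
Proof. by rewrite -[c *: x]addr0 br_linr br0r addr0. Qed.
Lemma brDr u x y : br u (x + y) = br u x + br u y.
Proof. by have := br_linr u 1 x y; rewrite !scale1r. Qed.
Lemma brZl u c x : br (c *: x) u = c *: br x u.
Proof. by rewrite -[c *: x]addr0 br_linl br0l addr0. Qed.
Lemma brDl u x y : br (x + y) u = br x u + br y u.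
Proof. by have := br_linl u 1 x y; rewrite !scale1r. Qed.
End Gen.

Section Char.
Variable F : fieldType.
Hypothesis charF0 : [pchar F] =i pred0.

Lemma natW_neq0 n : (n.+1)%:R != 0 :> F.
Proof. by have /pcharf0P -> := charF0. Qed.

Lemma intW_eq0 (m : int) : (m%:~R == 0 :> F) = (m == 0).
Proof.
case: m => n.
  by rewrite /= ((pcharf0P _).1 charF0).
by rewrite NegzE mulrNz oppr_eq0 -pmulrn ((pcharf0P _).1 charF0).
Qed.
End Char.

Section M.
Variable F : fieldType.
Hypothesis charF0 : [pchar F] =i pred0.
Local Notation W := (Wstar F).
Local Notation R := (WR F).

Lemma coefZ2 (P Q : W) (x y : F) k : (x *: P + y *: Q)@_k = x * P@_k + y * Q@_k.
Proof. by rewrite mcoeffD !mcoeffZ. Qed.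
Lemma coefU1 (k1 k : W_index) : (<< k1 >> : W)@_k = (k1 == k)%:R.
Proof. by rewrite mcoeffU. Qed.

Lemma Wder_coef (z : W) (c : int) (j : nat) :
  (Wder z)@_(c, j) = c%:~R * z@_(c, j) + (j.+1)%:R * z@_(c, j.+1).
Proof.
pose phi := fun z : W => ((Wder z)@_(c, j) : F^o).
pose psi := fun z : W => ((c%:~R * z@_(c, j) + (j.+1)%:R * z@_(c, j.+1)) : F^o).
change (phi z = psi z); move: z; apply: lin_ext.
- by move=> a x y; rewrite /phi Wder_lin mcoeffD mcoeffZ.
- move=> a x y; rewrite /psi !mcoeffD !mcoeffZ /=.
  rewrite /GRing.scale /=; ring.
move=> [a i]; rewrite /phi /psi WderU /= coefZ2 !coefU1.
rewrite !xpair_eqE; have [->|nac] := eqVneq a c; last by rewrite /= !mulr0 addr0.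
rewrite !andTb; congr (_ + _).
case: i => [|i] /=; first by rewrite mul0r mulr0.
rewrite eqSS; have [->|nij] := eqVneq i j; first by [].
by rewrite !mulr0.
Qed.
Lemma Wker (b : int) (z : W) : Wder z = b%:~R *: z -> z = z@_(b, 0%N) *: << (b, 0%N) >>.
Proof.
move=> e.
have h : forall c j, (c%:~R - b%:~R) * z@_(c, j) + (j.+1)%:R * z@_(c, j.+1) = 0.
  move=> c j; have := congr1 (mcoeff (c, j)) e; rewrite Wder_coef mcoeffZ => e2.
  by rewrite mulrBl addrAC e2 subrr.
have zb : forall j, z@_(b, j.+1) = 0.
  move=> j; have := h b j; rewrite subrr mul0r add0r => /eqP.
  by rewrite mulf_eq0 (negbTE (natW_neq0 charF0 j)) => /eqP.
have zc : forall c j, c != b -> z@_(c, j) = 0.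
  move=> c j ncb; apply/eqP; apply: contraT => nz.
  have step : forall n, z@_(c, (j + n)%N) != 0.
    elim=> [|n IH]; first by rewrite addn0.
    apply: contra IH => /eqP e0; have := h c (j + n)%N.
    rewrite -addnS e0 mulr0 addr0 => /eqP; rewrite mulf_eq0 => /orP [|//].
    by rewrite -intrB (intW_eq0 charF0) subr_eq0 (negbTE ncb).
  have := step (\max_(k <- msupp z | xpredT k) k.2)%N.+1.
  rewrite mcoeff_neq0 => /(@leq_bigmax_seq _ _ xpredT (fun k : W_index => k.2)) /=.
  move=> /(_ isT); set N := bigop _ _ _; lia.
apply/malgP => -[c j]; rewrite mcoeffZ coefU1.
have [->|ncb] := eqVneq c b.
  by case: j => [|j]; rewrite ?eqxx ?mulr1 // zb xpair_eqE /= andbF mulr0.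
rewrite zc // xpair_eqE eq_sym (negbTE ncb) /= mulr0 //.
Qed.
Lemma WderD (x y : W) : Wder (x + y) = Wder x + Wder y.
Proof. by have := Wder_lin 1 x y; rewrite !scale1r. Qed.
Lemma Wder0 : Wder (0 : W) = 0.
Proof. exact: (islin0 (@Wder_lin F)). Qed.
Lemma WderZ c (x : W) : Wder (c *: x) = c *: Wder x.
Proof. by have := Wder_lin c x 0; rewrite !addr0 Wder0 addr0. Qed.
Lemma WderN (x : W) : Wder (- x) = - Wder x.
Proof. by rewrite -scaleN1r WderZ scaleN1r. Qed.
Lemma WderB (x y : W) : Wder (x - y) = Wder x - Wder y.
Proof. by rewrite WderD WderN. Qed.

Lemma gen1 (V : lmodType F) (a n : F) (L M : V) : a != 0 ->
  a^-1 *: (a *: L + n *: M - n *: M) = L.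
Proof. by move=> a0; rewrite addrK scalerA mulVf // scale1r. Qed.
Lemma gen2 (V : lmodType F) (a : F) (L M : V) : a != 0 ->
  a^-1 *: (a *: L + 0 *: M) = L.
Proof. by move=> a0; rewrite scale0r addr0 scalerA mulVf // scale1r. Qed.
Lemma gen3 (V : lmodType F) (n : F) (L M : V) : n != 0 ->
  n^-1 *: (0 *: L + n *: M) = M.
Proof. by move=> a0; rewrite scale0r add0r scalerA mulVf // scale1r. Qed.

Lemma Wsurj (g : W) : exists u : W, Wder u = g.
Proof.
have cl : forall c (x y : W), (exists u, Wder u = x) -> (exists u, Wder u = y) ->
    exists u, Wder u = c *: x + y.
  move=> c x y [u1 h1] [u2 h2]; exists (c *: u1 + u2).
  by rewrite Wder_lin h1 h2.
have bas : forall a i, exists u : W, Wder u = << (a, i) >>.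
  move=> a i; have [->|a0] := eqVneq a 0.
    exists ((i.+1)%:R^-1 *: << (0 : int, i.+1) >>).
    rewrite WderZ WderU /=; apply: gen3; exact: natW_neq0.
  have a0' : a%:~R != 0 :> F by rewrite (intW_eq0 charF0).
  elim: i => [|i [v hv]].
    exists (a%:~R^-1 *: << (a, 0%N) >>).
    by rewrite WderZ WderU /=; apply: gen2.
  exists (a%:~R^-1 *: (<< (a, i.+1) >> - (i.+1)%:R *: v)).
  by rewrite WderZ WderB WderZ WderU hv /=; apply: gen1.
rewrite (monalgE g); elim: (msupp g : seq _) => [|k s [u IH]].
  by exists 0; rewrite big_nil Wder0.
rewrite big_cons UZ; apply: cl; last by exists u.
by case: k => a i; apply: bas.
Qed.
End M.

Section N.
Variable F : fieldType.
Hypothesis charF0 : [pchar F] =i pred0.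
Local Notation W := (Wstar F).
Local Notation R := (WR F).

Let d : R -> R := @Wder F.
Let dL : forall c (x y : R), d (c *: x + y) = c *: d x + d y := @Wder_lin F.
Let dM : forall (x y : R), d (x * y) = d x * y + x * d y := @Wder_leib F.

Lemma WbrDl u (x y : W) : Wbracket (x + y) u = Wbracket x u + Wbracket y u.
Proof. exact: (brDl (A := R) dL). Qed.
Lemma WbrDr u (x y : W) : Wbracket u (x + y) = Wbracket u x + Wbracket u y.
Proof. exact: (brDr (A := R) dL). Qed.
Lemma WbrBl u (x y : W) : Wbracket (x - y) u = Wbracket x u - Wbracket y u.
Proof. exact: (brBl (A := R) dL). Qed.
Lemma WbrBr u (x y : W) : Wbracket u (x - y) = Wbracket u x - Wbracket u y.
Proof. exact: (brBr (A := R) dL). Qed.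
Lemma WbrZl u c (x : W) : Wbracket (c *: x) u = c *: Wbracket x u.
Proof. exact: (brZl (A := R) dL). Qed.
Lemma WbrZr u c (x : W) : Wbracket u (c *: x) = c *: Wbracket u x.
Proof. exact: (brZr (A := R) dL). Qed.
Lemma Wbr_linr u c (x y : W) : Wbracket u (c *: x + y) = c *: Wbracket u x + Wbracket u y.
Proof. exact: (br_linr (A := R) dL). Qed.
Lemma Wbr0l (u : W) : Wbracket 0 u = 0.
Proof. exact: (br0l (A := R) dL). Qed.
Lemma Wjac (u x y : W) :
  Wbracket u (Wbracket x y) = Wbracket (Wbracket u x) y + Wbracket x (Wbracket u y).
Proof. exact: (br_jacobi (A := R) dL dM). Qed.

Definition W1 : W := << (0 : int, 0%N) >>.
Definition Xv : W := << (0 : int, 1%N) >>.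

Lemma gz1 (V : lmodType F) (P Q : V) : (0 : F) *: P + (0 : F) *: Q = 0.
Proof. by rewrite !scale0r addr0. Qed.
Lemma gz2 (V : lmodType F) (P Q : V) : (0 : F) *: P + (1 : F) *: Q = Q.
Proof. by rewrite !scale0r add0r scale1r. Qed.

Lemma Wder1 : Wder W1 = 0.
Proof. by rewrite /W1 WderU /= gz1. Qed.
Lemma WderX : Wder Xv = W1.
Proof. by rewrite /Xv WderU /= gz2. Qed.
Lemma Wmul1' (y : W) : Wmul W1 y = y.
Proof. exact: Wmul1. Qed.
Lemma Wmul1r (y : W) : Wmul y W1 = y.
Proof. by rewrite WmulC Wmul1'. Qed.
Lemma Wmul0r (y : W) : Wmul y 0 = 0.
Proof. by rewrite WmulC; apply: (islin0 (Wmul_linl (F:=F) y)). Qed.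

Lemma Wbr1 (y : W) : Wbracket W1 y = Wder y.
Proof. by rewrite /Wbracket Wder1 Wmul1' Wmul0r subr0. Qed.
Lemma Wbr_u1 (u : W) : Wbracket u W1 = - Wder u.
Proof. by rewrite /Wbracket Wder1 Wmul1' Wmul0r sub0r. Qed.
Lemma WbrX (y : W) : Wbracket Xv y = Wmul Xv (Wder y) - y.
Proof. by rewrite /Wbracket WderX Wmul1r. Qed.

Lemma WmulXU a i : Wmul Xv << (a, i) >> = << (a, i.+1) >>.
Proof. rewrite /Xv WmulUU /kk /=. by have -> : (0 + a = a)%R by rewrite add0r. Qed.

Lemma Xlin (c1 c2 : F) (P Q : W) :
  Wmul Xv (c1 *: P + c2 *: Q) = c1 *: Wmul Xv P + c2 *: Wmul Xv Q.
Proof. by rewrite WmulDr' !WmulZr. Qed.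

Lemma gz3 (V : lmodType F) (a : F) (P Q T : V) :
  a *: P + (0 : F) *: Q - T = a *: P + (0 : F) *: T - T.
Proof. by rewrite !scale0r. Qed.

Lemma brXL a i : Wbracket Xv << (a, i) >> =
  a%:~R *: << (a, i.+1) >> + i%:R *: << (a, i) >> - << (a, i) >>.
Proof.
rewrite WbrX WderU /= Xlin (WmulXU a i) (WmulXU a i.-1).
by case: i => [|i]; [exact: gz3 | exact: erefl].
Qed.
End N.

Arguments W1 {F}.
Arguments Xv {F}.
Section O.
Variable F : fieldType.
Hypothesis charF0 : [pchar F] =i pred0.
Local Notation W := (Wstar F).

Lemma iD (V : lmodType F) (phi : W -> V) : islin phi -> forall x y, phi (x + y) = phi x + phi y.
Proof. by move=> h x y; have := h 1 x y; rewrite !scale1r. Qed.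
Lemma iZ (V : lmodType F) (phi : W -> V) : islin phi -> forall c x, phi (c *: x) = c *: phi x.
Proof. by move=> h c x; have := h c x 0; rewrite !addr0 (islin0 h) addr0. Qed.
Lemma iB (V : lmodType F) (phi : W -> V) : islin phi -> forall x y, phi (x - y) = phi x - phi y.
Proof. by move=> h x y; rewrite (iD h) -(scaleN1r y) (iZ h) scaleN1r. Qed.

Lemma gen4 (V : lmodType F) (n k : F) (P Q T : V) : n != 0 -> P != 0 ->
  (0 : F) *: T + n *: (k *: P) - k *: P = k *: ((0 : F) *: Q + (0 : F) *: P - P) -> k = 0.
Proof.
move=> n0 P0; rewrite !scale0r !add0r scalerN => /eqP.
rewrite subr_eq addNr scalerA scaler_eq0 mulf_eq0 (negbTE n0) (negbTE P0) orbF.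
by move/eqP.
Qed.

Lemma gen5 (V : lmodType F) (a n c : F) (SL L' L : V) : a != 0 ->
  a *: SL + n *: (c *: L) - c *: L = c *: (a *: L' + n *: L - L) -> SL = c *: L'.
Proof.
move=> a0; rewrite scalerBr scalerDr !scalerA (mulrC c a) (mulrC c n) -!addrA.
move=> /addIr; rewrite -scalerA => /(congr1 (fun v => a^-1 *: v)).
by rewrite !scalerA mulrA mulVf // mul1r scale1r.
Qed.

Lemma gz4 (V : lmodType F) (c : F) (P Q : V) : c *: P + (0 : F) *: Q = c *: P.
Proof. by rewrite scale0r addr0. Qed.
Lemma gz5 (V : lmodType F) (c : F) (P Q : V) : (0 : F) *: P + c *: 0 = (0 : F) *: Q.
Proof. by rewrite !scale0r scaler0 addr0. Qed.

Lemma step_gen (S : W -> W) (Sl : islin S) (L' L : W) (a n c : F) : a != 0 ->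
  S L = c *: L -> S (a *: L' + n *: L - L) = c *: (a *: L' + n *: L - L) ->
  S L' = c *: L'.
Proof.
move=> a0 SL e; rewrite (iB Sl) (iD Sl) (iZ Sl) (iZ Sl) SL in e.
exact: gen5 a0 e.
Qed.

Lemma eig_gen (S : W -> W) (Sl : islin S) (Sder : forall y, S (Wder y) = Wder (S y))
  (E Q : W) (c n : F) : Wder E = c *: E + n *: Q -> n *: S Q = 0 ->
  Wder (S E) = c *: S E.
Proof. by move=> h h2; rewrite -Sder h (iD Sl) (iZ Sl) (iZ Sl) h2 addr0. Qed.

Lemma zero_gen (S : W -> W) (Sl : islin S) (L L2 O : W) (n k : F) :
  n != 0 -> O != 0 -> S L = k *: O ->
  Wbracket Xv L = (0 : F) *: L2 + n *: L - L ->
  Wbracket Xv O = (0 : F) *: Xv + (0 : F) *: O - O ->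
  S (Wbracket Xv L) = Wbracket Xv (S L) -> k = 0.
Proof.
move=> n0 O0 SL hL hO e.
rewrite hL (iB Sl) (iD Sl) (iZ Sl) (iZ Sl) SL WbrZr hO in e.
exact: gen4 n0 O0 e.
Qed.

Lemma scalar_of (S : W -> W) : islin S ->
  (forall x y, S (Wbracket x y) = Wbracket (S x) y + Wbracket x (S y)) ->
  S W1 = 0 -> S Xv = 0 ->
  forall a i, exists c : F, S << (a, i) >> = c *: << (a, i) >>.
Proof.
move=> Sl Sd S1 SX0.
have Sder : forall y, S (Wder y) = Wder (S y).
  by move=> y; rewrite -(Wbr1 y) -(Wbr1 (S y)) Sd S1 Wbr0l add0r.
have SX : forall y, S (Wbracket Xv y) = Wbracket Xv (S y).
  by move=> y; rewrite Sd SX0 Wbr0l add0r.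
move=> a i; have [->|a0] := eqVneq a 0.
  exists 0; rewrite scale0r.
  elim: i => [|i IH]; first exact: S1.
  have e1 : Wder (S << (0 : int, i.+1) >>) = (0 : int)%:~R *: S << (0 : int, i.+1) >>.
    apply: (eig_gen Sl Sder (WderU F (0 : int, i.+1))).
    by rewrite /= IH scaler0.
  have e2 := Wker charF0 e1.
  set k := (S _)@_(_, _) in e2.
  have k0 := zero_gen Sl (natW_neq0 charF0 i) (Wone_neq0 F) e2
    (brXL F (0 : int) i.+1) (brXL F (0 : int) 0) (SX _).
  by rewrite e2 k0 scale0r.
have a0' : a%:~R != 0 :> F by rewrite (intW_eq0 charF0).
have e1 : Wder (S << (a, 0%N) >>) = a%:~R *: S << (a, 0%N) >>.
  apply: (eig_gen Sl Sder (WderU F (a, 0%N))).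
  exact: scale0r.
have e2 := Wker charF0 e1.
set cE := (S _)@_(_, _) in e2.
exists cE; elim: i => [|i IH]; first exact: e2.
have e3 : S (Wbracket Xv << (a, i) >>) = cE *: Wbracket Xv << (a, i) >>.
  by rewrite SX IH; exact: WbrZr.
rewrite brXL in e3.
apply: (step_gen Sl a0' IH); exact: e3.
Qed.

Lemma gen6 (V : lmodType F) c (A B P Q : V) :
  c *: A + B - (c *: P + Q) = c *: (A - P) + (B - Q).
Proof. by rewrite scalerBr opprD !addrA; congr (_ + _); rewrite addrAC. Qed.
Lemma gen7 (V : zmodType) (A B C E : V) : (A + B) - (C + E) = (A - C) + (B - E).
Proof. by rewrite opprD !addrA; congr (_ + _); rewrite addrAC. Qed.
Lemma gen8 (V : zmodType) (A B C : V) : A - B = C -> A - (B + C) = 0.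
Proof. by move=> <-; rewrite opprD addrA subrr. Qed.
Lemma gen9 (V : zmodType) (A B : V) : B + (A - B) = A.
Proof. by rewrite addrC subrK. Qed.

Lemma derS (D : W -> W) (hD : is_derivation D) (u : W) :
  is_derivation (fun x => D x - Wbracket u x).
Proof.
case: hD => Dl Dd; split.
  by move=> c x y /=; rewrite Dl Wbr_linr; apply: gen6.
by move=> x y /=; rewrite Dd Wjac WbrBl WbrBr; apply: gen7.
Qed.

Lemma main (D : W -> W) (hD : is_derivation D) :
  exists (u : W) (S : W -> W),
    is_scalar_derivation S /\ forall x : W, D x = ad u x + S x.
Proof.
have [u0 hu0] := Wsurj charF0 (- D W1).
pose S0 := fun x => D x - Wbracket u0 x.
have dS0 : is_derivation S0 := derS hD u0.
have S01 : S0 W1 = 0 by rewrite /S0 Wbr_u1 hu0 opprK subrr.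
have e1 : Wder (S0 Xv) = (0 : int)%:~R *: S0 Xv.
  have := dS0.2 W1 Xv.
  rewrite (Wbr1 Xv) WderX S01 Wbr0l add0r (Wbr1 (S0 Xv)) => <-.
  by rewrite scale0r.
have e2 := Wker charF0 e1.
set c := (S0 Xv)@_(_, _) in e2.
pose u := u0 + c *: W1.
pose S := fun x => D x - Wbracket u x.
have dS : is_derivation S := derS hD u.
have S1 : S W1 = 0.
  rewrite /S /u WbrDl WbrZl (Wbr1 W1) Wder1 scaler0 addr0; exact: S01.
have SX : S Xv = 0.
  rewrite /S /u WbrDl WbrZl (Wbr1 Xv) WderX; apply: gen8; exact: e2.
exists u, S; split; last by move=> x; rewrite /ad /S gen9.
split; first exact: dS.
move=> a i; exact: (scalar_of dS.1 dS.2 S1 SX a i).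
Qed.
End O.

Unset Implicit Arguments. Set Strict Implicit.

Theorem theorem2 (F : fieldType) (charF0 : [pchar F] =i pred0)
    (D : Wstar F -> Wstar F) (hD : is_derivation D) :
  exists (u : Wstar F) (S : Wstar F -> Wstar F),
    is_scalar_derivation S /\ forall x : Wstar F, D x = ad u x + S x.
Proof.
exact: (main charF0 hD).
Qed.
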